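(* Let $k$ be a positive integer, $a=3k+1$, $S=\{a,2a-3,2a-2\}$ and $H_{6,k}=\langle S\rangle$. Then $H_{6,k}$ is a $3$-permutation numerical semigroup.
   Context: $\mathbb{N}=\{0,1,2,\dots\}$. A numerical semigroup is a submonoid $G$ of $(\mathbb{N},+,0)$ with $\mathbb{N}\setminus G$ finite; $\langle S\rangle$ is the submonoid generated by $S$. Writing the elements of a numerical semigroup as $0=g_0<g_1<g_2<\cdots$, it is an $n$-permutation numerical semigroup if it is generated by $\{g_1,\dots,g_n\}$ and for every $k\in\mathbb{N}$ the tuple $(g_{kn+1}\bmod n,\dots,g_{kn+n}\bmod n)$ contains exactly one representative of each residue class mod $n$. *)

(* Defs.v *)
From mathcomp Require Import all_boot.
Set Implicit Arguments. Unset Strict Implicit. Unset Printing Implicit Defensive.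

Inductive gen (S : nat -> Prop) : nat -> Prop :=
  | gen0 : gen S 0
  | genS : forall s x, S s -> gen S x -> gen S (s + x).

Definition submonoid (G : nat -> Prop) : Prop :=
  G 0 /\ (forall x y, G x -> G y -> G (x + y)).

Definition numerical_semigroup (G : nat -> Prop) : Prop :=
  submonoid G /\ exists N, forall x, N <= x -> G x.

Definition enumerates (g : nat -> nat) (G : nat -> Prop) : Prop :=
  (forall i j, i < j -> g i < g j) /\ (forall x, G x <-> exists i, g i = x).

Definition perm_numerical_semigroup (n : nat) (G : nat -> Prop) : Prop :=
  numerical_semigroup G /\
  exists g : nat -> nat,
    enumerates g G /\
    (forall x, G x <-> gen (fun y => exists2 i, 1 <= i <= n & y = g i) x) /\
    (forall k r, r < n ->
       exists! j, j < n /\ g (k * n + j + 1) %% n = r).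

(* Main.v *)
Require Import Defs.
From mathcomp Require Import all_boot.
From mathcomp Require Import zify.
From Stdlib Require Import ClassicalEpsilon.

Definition memb k x := exists n d, x + d = n * (3*k+1) /\
  (d = 0 \/ (2 <= d /\ d <= 3 * (n %/ 2))).

Definition SS k := fun x => x = 3*k+1 \/ x = 2*(3*k+1)-3 \/ x = 2*(3*k+1)-2.

Lemma gen_memb k x : 0 < k -> gen (SS k) x -> memb k x.
Proof.
move=> hk; elim=> [|s y Hs _ [n [d [e hd]]]].
- by exists 0, 0; split => //; left.
- case: Hs => [->|[->|->]].
  + exists n.+1, d; split; first lia.
    case: hd => [->|hd]; [by left| right; lia].
  + exists n.+2, (d+3); split; first lia.
    right; case: hd; lia.
  + exists n.+2, (d+2); split; first lia.
    right; case: hd; lia.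
Qed.

Lemma memb_gen k x : 0 < k -> memb k x -> gen (SS k) x.
Proof.
move=> hk [n [d [e hd]]].
elim/ltn_ind: n x d e hd => n IH x d e hd.
case: n IH e hd => [|n] IH e hd.
- have -> : x = 0 by lia. exact: gen0.
- case: hd => [d0|hd].
  + subst d.
    have -> : x = (3*k+1) + n*(3*k+1) by lia.
    apply: genS; first by left.
    apply: (IH n ltac:(lia) _ 0); [lia | by left].
  + case: n IH e hd => [|n] IH e hd; first lia.
    have := leq_mul (leqnn n) hk; rewrite muln1 => hnk.
    have [d2|[d3|[d4|d5]]] : d = 2 \/ d = 3 \/ d = 4 \/ 5 <= d by lia.
    * have -> : x = (2*(3*k+1)-2) + n*(3*k+1) by lia.
      apply: genS; first by right; right.
      apply: (IH n ltac:(lia) _ 0); [lia | by left].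
    * have -> : x = (2*(3*k+1)-3) + n*(3*k+1) by lia.
      apply: genS; first by right; left.
      apply: (IH n ltac:(lia) _ 0); [lia | by left].
    * have -> : x = (2*(3*k+1)-2) + (x - (2*(3*k+1)-2)) by lia.
      apply: genS; first by right; right.
      apply: (IH n ltac:(lia) _ 2); [lia | right; lia].
    * have -> : x = (2*(3*k+1)-3) + (x - (2*(3*k+1)-3)) by lia.
      apply: genS; first by right; left.
      apply: (IH n ltac:(lia) _ (d-3)); [lia | right; lia].
Qed.

Lemma window k n x : 0 < k -> 1 <= n <= 2*k -> n*(3*k+1) < x + (3*k+1) ->
  x <= n*(3*k+1) -> memb k x ->
  x = n*(3*k+1) \/ (n*(3*k+1) <= x + 3*(n%/2) /\ x + 2 <= n*(3*k+1)).
Proof.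
move=> hk hn h1 h2 [n' [d [e hd]]].
case: (ltngtP n' n) => [hlt|hgt|heq].
- have : n'.+1 * (3*k+1) <= n * (3*k+1) by rewrite leq_mul2r hlt orbT.
  lia.
- have hm : n' = n.+1 + (n' - n.+1) by lia.
  move: (n' - n.+1) hm => m hm.
  have := leq_mul (leqnn m) hk.
  subst n'. case: hd; lia.
- subst n'. case: hd; lia.
Qed.

Lemma full k x : 0 < k -> 2*k*(3*k+1) <= x -> memb k x.
Proof.
move=> hk hx.
move Ea: (3*k+1) hx => a hx.
have ha : 0 < a by lia.
have hq : 2*k <= x %/ a.
  have := leq_div2r a hx. by rewrite mulnK.
have := divn_eq x a; have := ltn_pmod x ha.
move: (x %/ a) (x %% a) hq => q r hq hr e.
case: (posnP r) => [r0|rpos].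
  exists q, 0; split; [lia | by left].
case: (ltnP r (a-1)) => hr'.
  exists q.+1, (a-r); split; [lia | right; lia].
exists q.+2, (a+1); split; [lia | right; lia].
Qed.

Definition membb k x : bool :=
  if excluded_middle_informative (memb k x) then true else false.

Lemma membbP k x : reflect (memb k x) (membb k x).
Proof. rewrite /membb; case: excluded_middle_informative => h; by constructor. Qed.

Lemma next_ex k x : exists y, (x < y) && membb k y.
Proof.
exists (x.+1 * (3*k+1)); apply/andP; split; first lia.
apply/membbP; exists x.+1, 0; split; [lia | by left].
Qed.

Definition next k x := ex_minn (next_ex k x).

Lemma next_spec k x : x < next k x /\ memb k (next k x) /\
  forall w, x < w -> memb k w -> next k x <= w.
Proof.
rewrite /next; case: ex_minnP => m /andP [h1 /membbP h2] h3.
split => //; split => // w hw mw; apply: h3; rewrite hw; exact/membbP.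
Qed.

Lemma next_eq k x z : x < z -> memb k z ->
  (forall w, x < w -> w < z -> ~ memb k w) -> next k x = z.
Proof.
move=> h1 h2 h3; have [n1 [n2 n3]] := next_spec k x.
have := n3 z h1 h2 => hle.
case: (ltnP (next k x) z) => h; last lia.
by case: (h3 _ n1 h n2).
Qed.

Lemma next_succ k x : memb k x.+1 -> next k x = x.+1.
Proof. move=> h; apply: next_eq => // w h1 h2; lia. Qed.

Fixpoint g k i := if i is i'.+1 then next k (g k i') else 0.

Definition st k y :=
  (exists n, 1 <= n < 2*k /\ y = n*(3*k+1)) \/
  (exists n t, 4 <= n <= 2*k /\ t + 2 <= n %/ 2 /\
      y + 3*(n%/2) = n*(3*k+1) + 2 + 3*t) \/
  (exists t, y = 2*k*(3*k+1) + 3*t).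

Lemma st_mult k N : 0 < k -> 1 <= N <= 2*k -> st k (N*(3*k+1)).
Proof.
move=> hk hN; case: (ltnP N (2*k)) => h.
  by left; exists N; split => //; lia.
right; right; exists 0. have -> : N = 2*k by lia. by rewrite muln0 addn0.
Qed.

Lemma lvl_end k N y : 0 < k -> 1 <= N <= 2*k -> y + 2 = N*(3*k+1) ->
  next k y = N*(3*k+1).
Proof.
move=> hk hN e; apply: next_eq; first lia.
  exists N, 0; split; [lia | by left].
move=> w h1 h2 hw.
have := window k (N) w hk hN ltac:(lia) ltac:(lia) hw. lia.
Qed.

Lemma nextB k n : 0 < k -> 1 <= n < 2*k ->
  next k (n*(3*k+1)) = n.+1*(3*k+1) - 3*(n.+1 %/ 2).
Proof.
move=> hk hn; apply: next_eq; first lia.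
  exists n.+1, (3*(n.+1 %/ 2)); split; [lia | right; lia].
move=> w h1 h2 hw.
have := window k (n.+1) w hk ltac:(lia) ltac:(lia) ltac:(lia) hw. lia.
Qed.

Lemma block k y : 0 < k -> st k y -> exists v1 v2,
  next k y = v1 /\ next k v1 = v2 /\
  y %% 3 <> v1 %% 3 /\ y %% 3 <> v2 %% 3 /\ v1 %% 3 <> v2 %% 3 /\
  st k (next k v2).
Proof.
move=> hk [[n [hn ->]]|[[n [t [hn [ht ey]]]]|[t ->]]].
- rewrite nextB //.
  have e2 : next k (n.+1*(3*k+1) - 3*(n.+1 %/ 2)) =
            (n.+1*(3*k+1) - 3*(n.+1 %/ 2)).+1.
    apply: next_succ; exists n.+1, (3*(n.+1 %/ 2) - 1); split; [lia|right; lia].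
  exists (n.+1*(3*k+1) - 3*(n.+1 %/ 2)), (n.+1*(3*k+1) - 3*(n.+1 %/ 2)).+1.
  rewrite e2; do 2 (split; first done).
  split; first lia. split; first lia. split; first lia.
  case: (leqP 2 (n.+1 %/ 2)) => hM.
  + rewrite next_succ; last first.
      exists n.+1, (3*(n.+1 %/ 2) - 2); split; [lia|right; lia].
    right; left; exists n.+1, 0; split; first lia. split; first lia. lia.
  + rewrite (@lvl_end k n.+1) //; first (apply: st_mult => //; lia).
    lia. lia.
- have e1 : next k y = y.+1.
    apply: next_succ; exists n, (3*(n %/ 2) - 3 - 3*t); split; [lia|right; lia].
  have e2 : next k y.+1 = y.+2.
    apply: next_succ; exists n, (3*(n %/ 2) - 4 - 3*t); split; [lia|right; lia].
  exists y.+1, y.+2; rewrite e1 e2; do 2 (split; first done).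
  split; first lia. split; first lia. split; first lia.
  case: (leqP (t + 3) (n %/ 2)) => hM.
  + rewrite next_succ; last first.
      exists n, (3*(n %/ 2) - 5 - 3*t); split; [lia|right; lia].
    right; left; exists n, t.+1; split; first lia. split; first lia. lia.
  + rewrite (@lvl_end k n) //; first (apply: st_mult => //; lia).
    lia. lia.
- set yy := 2*k*(3*k+1) + 3*t.
  have m1 : memb k yy.+1 by apply: full => //; lia.
  have m2 : memb k yy.+2 by apply: full => //; lia.
  have m3 : memb k yy.+3 by apply: full => //; lia.
  exists yy.+1, yy.+2; rewrite next_succ // next_succ //.
  do 2 (split; first done).
  split; first lia. split; first lia. split; first lia.
  rewrite next_succ //. right; right; exists t.+1. rewrite /yy; lia.
Qed.

Lemma perm3 (f : nat -> nat) r : r < 3 -> f 0 %% 3 <> f 1 %% 3 ->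
  f 0 %% 3 <> f 2 %% 3 -> f 1 %% 3 <> f 2 %% 3 ->
  exists! j, j < 3 /\ f j %% 3 = r.
Proof.
move=> hr h01 h02 h12.
have := ltn_pmod (f 0) (isT : 0 < 3).
have := ltn_pmod (f 1) (isT : 0 < 3).
have := ltn_pmod (f 2) (isT : 0 < 3).
move: h01 h02 h12.
move: (f 0 %% 3) (f 1 %% 3) (f 2 %% 3) => u0 u1 u2.
Abort.

Lemma perm3 (f : nat -> nat) r : r < 3 -> f 0 %% 3 <> f 1 %% 3 ->
  f 0 %% 3 <> f 2 %% 3 -> f 1 %% 3 <> f 2 %% 3 ->
  exists! j, j < 3 /\ f j %% 3 = r.
Proof.
move=> hr h01 h02 h12.
have : r = f 0 %% 3 \/ r = f 1 %% 3 \/ r = f 2 %% 3 by lia.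
case=> [->|[->|->]]; [exists 0|exists 1|exists 2]; (split; first done);
  move=> [|[|[|j]]] [hj e] //; lia.
Qed.

Lemma gen_mono (P Q : nat -> Prop) x : (forall y, P y -> Q y) -> gen P x -> gen Q x.
Proof. move=> h; elim => [|s y hs _ IH]; [exact: gen0 | exact: genS (h _ hs) IH]. Qed.

Lemma g_gt k i : g k i < g k i.+1.
Proof. by case: (next_spec k (g k i)). Qed.

Lemma g_memb k i : memb k (g k i).
Proof.
case: i => [|i]; first by exists 0, 0; split => //; left.
by case: (next_spec k (g k i)) => _ [].
Qed.

Lemma g_incr k i j : i < j -> g k i < g k j.
Proof.
elim: j => // j IH; rewrite ltnS leq_eqVlt => /orP [/eqP ->|/IH h].
  exact: g_gt.
exact: ltn_trans h (g_gt k j).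
Qed.

Lemma g_ge k i : i <= g k i.
Proof. elim: i => // i IH; have := g_gt k i; lia. Qed.

Lemma crossing (f : nat -> bool) N : f 0 -> ~~ f N -> exists i, f i && ~~ f i.+1.
Proof.
move=> h0; elim: N => [|N IH]; first by rewrite h0.
case hN: (f N) => hN1.
  by exists N; rewrite hN hN1.
by apply: IH; rewrite hN.
Qed.

Theorem lemma4p6 (k : nat) (hk : 0 < k) :
  let a := 3 * k + 1 in
  perm_numerical_semigroup 3
    (gen (fun x => x = a \/ x = 2 * a - 3 \/ x = 2 * a - 2)).
Proof.
cbv zeta.
change (perm_numerical_semigroup 3 (gen (SS k))).
have g1 : g k 1 = 3*k+1.
  rewrite /=; apply: next_eq; first lia.
    exists 1, 0; split; [lia|by left].
  move=> w h1 h2 hw.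
  have := window k (1) w hk ltac:(lia) ltac:(lia) ltac:(lia) hw. lia.
have g2 : g k 2 = 2*(3*k+1)-3.
  have -> : g k 2 = next k (g k 1) by []. rewrite g1.
  have := nextB k 1 hk ltac:(lia). rewrite mul1n => ->. lia.
have g3 : g k 3 = 2*(3*k+1)-2.
  have -> : g k 3 = next k (g k 2) by []. rewrite g2 next_succ; first lia.
  exists 2, 2; split; [lia | right; lia].
split.
  split.
    split; first exact: gen0.
    move=> x y hx hy; elim: hx => [|s x' hs _ IH]; first by rewrite add0n.
    rewrite -addnA; exact: genS.
  exists (2*k*(3*k+1)) => x hx; apply: memb_gen => //; exact: full.
exists (g k); split.
  split; first exact: g_incr.
  move=> x; split.
    move/(gen_memb _ _ hk) => hx.
    have [i /andP [hi hi1]] := crossing (fun i => g k i <= x) x.+1 (leq0n _)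
      ltac:(rewrite -ltnNge; have := g_ge k x.+1; lia).
    exists i; rewrite -ltnNge /= in hi1.
    case: (next_spec k (g k i)) => _ [_ hmin].
    case: (ltnP (g k i) x) => h; last lia.
    have := hmin x h hx; lia.
  by move=> [i <-]; apply: memb_gen => //; exact: g_memb.
split.
  move=> x; split; apply: gen_mono => y.
    move=> [->|[->|->]]; [exists 1 => //|exists 2 => //|exists 3 => //].
  move=> [i hi ->]; case: i hi => [|[|[|[|i]]]] // _.
  - by left.
  - by right; left.
  - by right; right.
have hst : forall m, st k (g k (m*3+1)).
  elim=> [|m IH]; first by rewrite g1; left; exists 1; split; [lia|lia].
  have [v1 [v2 [e1 [e2 [_ [_ [_ hs]]]]]]] := block _ _ hk IH.
  have -> : m.+1*3+1 = (m*3+1).+3 by lia.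
  by subst v2 v1; exact: hs.
move=> m r hr.
have [v1 [v2 [e1 [e2 [d01 [d02 [d12 _]]]]]]] := block _ _ hk (hst m).
subst v1 v2.
have E0 : m*3+0+1 = m*3+1 by lia.
have E1 : m*3+1+1 = (m*3+1).+1 by lia.
have E2 : m*3+2+1 = (m*3+1).+2 by lia.
apply: (@perm3 (fun j => g k (m*3 + j + 1))) => //.
- by rewrite E0 E1.
- by rewrite E0 E2.
- by rewrite E1 E2.
Qed.
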